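(* Let $K$ be a finite simplicial complex, $N\subseteq K$ a closed set, and for $i=1,\dots,n$ let $\mathcal{V}_i$ be a multivector field on $K$, $\mathcal{M}_i$ a Morse decomposition (under $\mathcal{V}_i$) of an isolated invariant set $S_i$ isolated by $N$, and $G_i$ the corresponding Conley-Morse graph. Suppose each Morse set $M\in\mathcal{M}_i$ is associated with a unique index pair $(P_M,E_M)$ in $N$ for $M$. Then the algorithm described below (Algorithm FindConleyMorseFiltrations) outputs exactly the set of all Conley-Morse filtrations for $G_1,\dots,G_n$.
   Context: Notation: $\sigma\le\tau$ means $\sigma$ is a face of $\tau$; $\mathrm{cl}(A)=\{\tau:\tau\le\sigma \text{ for some }\sigma\in A\}$; $A$ is closed if $A=\mathrm{cl}(A)$; $\mathrm{mo}(A)=\mathrm{cl}(A)\setminus A$. A multivector is a convex set $A\subseteq K$ (no $\sigma\in K\setminus A$ with $\sigma_1\le\sigma\le\sigma_2$ for $\sigma_1,\sigma_2\in A$); a multivector field $\mathcal{V}$ is a partition of $K$ into multivectors, $[\sigma]_{\mathcal V}$ the multivector containing $\sigma$, and $F_{\mathcal V}(\sigma)=[\sigma]_{\mathcal V}\cup\mathrm{cl}(\sigma)$, $F_{\mathcal V}(A)=\bigcup_{\sigma\in A}F_{\mathcal V}(\sigma)$. A path is a finite sequence $\sigma_1,\dots,\sigma_m$ with $\sigma_{j}\in F_{\mathcal V}(\sigma_{j-1})$; a solution is a bi-infinite such sequence. A multivector $V$ is critical if $H_k(\mathrm{cl}(V),\mathrm{mo}(V))\ne 0$ for some $k$ (homology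 over a finite field), regular otherwise. A solution $\rho:\mathbb Z\to K$ is essential if for each $i$ with $[\rho(i)]_{\mathcal V}$ regular there are $i^-<i<i^+$ with $[\rho(i^\pm)]_{\mathcal V}\ne[\rho(i)]_{\mathcal V}$. $\mathrm{inv}_{\mathcal V}(A)$ is the set of $\sigma\in A$ lying on an essential solution with image in $A$. $S$ is invariant if $\mathrm{inv}(S)=S$. An invariant set $S$ is isolated by a closed set $N$ if $S$ is a union of multivectors of $\mathcal V$ and every path in $N$ with both endpoints in $S$ lies in $S$. A Morse decomposition of $S$ (indexed by a finite poset $\mathbb P$) is a family $\{M_p\}_{p\in\mathbb P}$ of mutually disjoint isolated invariant subsets of $S$ such that every essential solution $\rho$ in $S$ either has image in some $M_r$ or has $\alpha(\rho)\subseteq M_q$, $\omega(\rho)\subseteq M_p$ with $q>p$, where $\alpha(\rho)=\bigcap_{i\ge1}\rho((-\infty,-i])$, $\omega(\rho)=\bigcap_{i\ge1}\rho([i,\infty))$. The Conley-Morse graph has one vertex per Morse set, a directed edge $M\to M'$ iff there is a connection (a path in $N$ starting in $M$ and ending in $M'$), and vertices annotated by Poincaré polynomials of the Conley indices. An index pair in $N$ for $S$ (isolated by $N$) is a pair of closed sets $E\subseteq P\subseteq N$ with: $F_{\mathcal V}(E)\cap N\subseteq E$; $F_{\mathcal V}(P)\cap N\subseteq P$; $F_{\mathcal V}(P\setminus E)\subseteq N$; $S=\mathrm{inv}(P\setminus E)$. A sequence $\{(P_i,E_i)\}_{i=a}^b$, where $(P_i,E_i)$ is the index pair of some Morse set in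 $\mathcal M_i$, is feasible if $(P_i\setminus E_i)\cap(P_{i+1}\setminus E_{i+1})\ne\emptyset$ for $a\le i<b$; it is maximal if moreover there is no index pair $(P_{a-1},E_{a-1})$ of a Morse set in $\mathcal M_{a-1}$ with $(P_{a-1}\setminus E_{a-1})\cap(P_a\setminus E_a)\neq\emptyset$ and no index pair $(P_{b+1},E_{b+1})$ of a Morse set in $\mathcal M_{b+1}$ with $(P_b\setminus E_b)\cap(P_{b+1}\setminus E_{b+1})\ne\emptyset$. The Conley-Morse filtration of a maximal sequence is the relative zigzag filtration $(P_a,E_a)\supseteq(P_a\cap P_{a+1},E_a\cap E_{a+1})\subseteq(P_{a+1},E_{a+1})\supseteq\cdots\subseteq(P_b,E_b)$. Algorithm FindConleyMorseFiltrations: initialize sets $alive=\emptyset$, $all=\emptyset$. For $i=1,\dots,n$: set $to\_remove=\emptyset$, $still\_alive=\emptyset$; for each sequence $s\in alive$ with last term $(P',E')$ and each $M\in\mathcal M_i$ with $(P,E)=(P_M,E_M)$ satisfying $(P\setminus E)\cap(P'\setminus E')\ne\emptyset$: add to $still\_alive$ a copy of $s$ with $(P,E)$ appended, mark $M$ as ''in a sequence'', and add $s$ to $to\_remove$. Then let $dead=alive\setminus to\_remove$, set $alive=still\_alive$, $all=all\cup dead$, and for each $M\in\mathcal M_i$ not marked ''in a sequence'' add the one-term sequence $((P_M,E_M))$ to $alive$. After the loop set $all=all\cup alive$ and output the relative zigzag filtrations of the sequences in $all$. *)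

(* Defs.v *)
From HB Require Import structures.
From mathcomp Require Import all_boot all_order all_algebra.
Set Implicit Arguments. Unset Strict Implicit. Unset Printing Implicit Defensive.
Import Order.TTheory GRing.Theory Num.Theory.

(* Simplices of a finite simplicial complex on the vertex set 'I_d are
   nonempty sets of vertices; the face relation is set inclusion. *)
Section Complex.
Variable d : nat.
Local Notation simplex := {set 'I_d}.
Local Notation cset := {set simplex}.

Definition is_complex (K : cset) : Prop :=
  set0 \notin K /\
  forall s t : simplex, s \in K -> t \subset s -> t != set0 -> t \in K.

Definition cl (K A : cset) : cset := [set t in K | [exists s in A, t \subset s]].
Definition mo (K A : cset) : cset := cl K A :\: A.
Definition closed_in (K A : cset) : Prop := A \subset K /\ cl K A = A.

Definition convex (K A : cset) : Prop :=
  A \subset K /\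
  forall s1 s s2 : simplex, s1 \in A -> s2 \in A -> s \in K ->
    s1 \subset s -> s \subset s2 -> s \in A.

Definition mvf (K : cset) (V : {set cset}) : Prop :=
  partition V K /\ forall A, A \in V -> convex K A.

Definition Fv (K : cset) (V : {set cset}) (s : simplex) : cset :=
  pblock V s :|: cl K [set s].
Definition FvS (K : cset) (V : {set cset}) (A : cset) : cset :=
  \bigcup_(s in A) Fv K V s.

(* Relative simplicial homology H_k(cl A, mo A) over a field F.  The relative
   chain group C(cl A)/C(mo A) has basis cl A \ mo A = A; oriented simplices
   use the order of the vertices 'I_d. *)
Section Homology.
Variable F : finFieldType.
Definition chain := {ffun simplex -> F}.

Definition inc (s t : simplex) : F :=
  if (t \subset s) && (#|s :\: t| == 1)%N
  then ((-1) ^+ #|[set u in s | [exists w in s :\: t, (u < w)%N]]|)%R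
  else 0%R.

Definition rbd (A : cset) (c : chain) : chain :=
  [ffun t => if t \in A then (\sum_(s in A) c s * inc s t)%R else 0%R].

Definition kchain (A : cset) (k : nat) (c : chain) : Prop :=
  forall s, c s != 0%R -> s \in A /\ #|s| = k.+1.

Definition rel_homology_nonzero (A : cset) (k : nat) : Prop :=
  exists c, kchain A k c /\ rbd A c = 0%R /\
    ~ (exists e, kchain A k.+1 e /\ rbd A e = c).

Definition critical (A : cset) : Prop := exists k, rel_homology_nonzero A k.
End Homology.

Section Dynamics.
Variable F : finFieldType.
Variables (K : cset) (V : {set cset}).

Definition solution (rho : int -> simplex) : Prop :=
  forall z : int, rho (z + 1)%R \in Fv K V (rho z).

Definition essential (rho : int -> simplex) : Prop :=
  solution rho /\
  forall i : int, ~ critical F (pblock V (rho i)) ->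
    (exists im : int, (im < i)%R /\ pblock V (rho im) != pblock V (rho i)) /\
    (exists ip : int, (i < ip)%R /\ pblock V (rho ip) != pblock V (rho i)).

Definition in_inv (A : cset) (s : simplex) : Prop :=
  s \in A /\ exists rho, essential rho /\ (forall z, rho z \in A) /\
                         exists z, rho z = s.

Definition invariant (S : cset) : Prop := forall s, s \in S <-> in_inv S s.

Definition Frel : rel simplex := fun a b => b \in Fv K V a.

Definition isolated_by (N S : cset) : Prop :=
  invariant S /\
  (forall s, s \in S -> pblock V s \subset S) /\
  forall (x : simplex) (p : seq simplex), path Frel x p ->
    all (fun y => y \in N) (x :: p) -> x \in S -> last x p \in S ->
    all (fun y => y \in S) (x :: p).

Definition index_pair (N S P E : cset) : Prop :=
  isolated_by N S /\
  closed_in K P /\ closed_in K E /\ E \subset P /\ P \subset N /\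
  FvS K V E :&: N \subset E /\
  FvS K V P :&: N \subset P /\
  FvS K V (P :\: E) \subset N /\
  (forall s, s \in S <-> in_inv (P :\: E) s).

Definition alpha_lim (rho : int -> simplex) (s : simplex) : Prop :=
  forall i : nat, exists z : int, (z <= - (i.+1)%:Z)%R /\ rho z = s.
Definition omega_lim (rho : int -> simplex) (s : simplex) : Prop :=
  forall i : nat, exists z : int, ((i.+1)%:Z <= z)%R /\ rho z = s.

Definition morse_dec (N S : cset) (k : nat) (M : 'I_k -> cset)
    (lt : rel 'I_k) : Prop :=
  irreflexive lt /\ transitive lt /\
  (forall p q, p != q -> [disjoint M p & M q]) /\
  (forall p, M p \subset S /\ isolated_by N (M p)) /\
  forall rho, essential rho -> (forall z, rho z \in S) ->
    (exists r, forall z, rho z \in M r) \/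
    (exists q p, lt p q /\ (forall s, alpha_lim rho s -> s \in M q) /\
                          (forall s, omega_lim rho s -> s \in M p)).
End Dynamics.
End Complex.

Section Algo.
Variable T : finType.
Definition ipair := ({set T} * {set T})%type.
Definition meetp (p q : ipair) : bool :=
  (p.1 :\: p.2) :&: (q.1 :\: q.2) != set0.

(* a sequence: (starting index a, list of terms (P_a,E_a),...,(P_b,E_b)) *)
Definition sq := (nat * seq ipair)%type.
Definition lastp (s : sq) : ipair := last (set0, set0) s.2.

Fixpoint zigzag (p : ipair) (L : seq ipair) : seq ipair :=
  match L with
  | [::] => [:: p]
  | q :: L' => p :: (p.1 :&: q.1, p.2 :&: q.2) :: zigzag q L'
  end.

Definition filtration (s : sq) : sq :=
  (s.1, match s.2 with [::] => [::] | p :: L => zigzag p L end).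

(* one iteration (index i) of FindConleyMorseFiltrations;
   state = (alive, all); pairs i = index pairs of the Morse sets of M_i *)
Definition alg_step (pairs : nat -> seq ipair) (st : seq sq * seq sq) (i : nat)
  : seq sq * seq sq :=
  let alive := st.1 in let all_ := st.2 in
  let still := flatten [seq [seq (s.1, rcons s.2 q) | q <- pairs i & meetp (lastp s) q]
                       | s <- alive] in
  let dead := [seq s <- alive | ~~ has (meetp (lastp s)) (pairs i)] in
  let fresh := [seq (i, [:: q]) | q <- pairs i
                                & ~~ has (fun s => meetp (lastp s) q) alive] in
  (still ++ fresh, all_ ++ dead).

Definition find_CM_filtrations (n : nat) (pairs : nat -> seq ipair) : seq sq :=
  let st := foldl (alg_step pairs) ([::], [::]) (iota 1 n) in
  map filtration (st.2 ++ st.1).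
End Algo.

(* f is a Conley-Morse filtration for G_1..G_n: the filtration of a maximal
   feasible sequence (P_a,E_a),...,(P_b,E_b), 1 <= a <= b <= n, where
   (P_i,E_i) = PE i j is the index pair of some Morse set j of M_i. *)
Definition is_CM_filtration (T : finType) (n : nat) (m : nat -> nat)
    (PE : forall i, 'I_(m i) -> ipair T) (f : sq T) : Prop :=
  exists (a : nat) (L : seq (ipair T)),
    f = filtration (a, L) /\ L != [::] /\ (1 <= a)%N /\ (a + size L <= n.+1)%N /\
        (forall k, (k < size L)%N ->
           exists j : 'I_(m (a + k)), nth (set0, set0) L k = PE (a + k) j) /\
        (forall k, (k.+1 < size L)%N ->
           meetp (nth (set0, set0) L k) (nth (set0, set0) L k.+1)) /\
        ((1 < a)%N -> forall j : 'I_(m a.-1), ~~ meetp (PE a.-1 j) (head (set0, set0) L)) /\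
      ((a + size L <= n)%N ->
           forall j : 'I_(m (a + size L)),
             ~~ meetp (last (set0, set0) L) (PE (a + size L) j)).

(* Main.v *)
Require Import Defs.
From mathcomp Require Import all_boot all_order all_algebra.
From mathcomp Require Import zify.

Section Alg.
Variable T : finType.
Variable P : nat -> seq (ipair T).
Local Notation x0 := ((set0, set0) : ipair T).

Definition VA (e a : nat) (L : seq (ipair T)) : Prop :=
  [/\ L != [::] /\ (1 <= a)%N, (a + size L = e.+1)%N,
      (forall k, (k < size L)%N -> nth x0 L k \in P (a + k)),
      (forall k, (k.+1 < size L)%N -> meetp (nth x0 L k) (nth x0 L k.+1))
    & ((1 < a)%N -> forall q, q \in P a.-1 -> ~~ meetp q (head x0 L))].

Lemma VA_rcons e a L q : L != [::] ->
  VA e.+1 a (rcons L q) <-> [/\ VA e a L, q \in P e.+1 & meetp (last x0 L) q].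
Proof.
move=> L0; have hs : (0 < size L)%N by case: L L0.
have hh : head x0 (rcons L q) = head x0 L by case: (L) L0.
split.
- case=> [[_ a1]]; rewrite size_rcons hh => sz hin hm hl.
  have sz' : (a + size L = e.+1)%N. { move: sz; rewrite addnS; case. done. }
  split; last first.
  + have := hm (size L).-1; rewrite prednK // ltnSn => /(_ isT).
    have h1 : ((size L).-1 < size L)%N by rewrite prednK.
    by rewrite !nth_rcons ltnn eqxx h1 nth_last.
  + by have := hin (size L); rewrite ltnSn nth_rcons ltnn eqxx sz' => /(_ isT).
  split => //.
  + move=> k hk; have := hin k; rewrite nth_rcons hk; apply; exact: ltnW.
  + move=> k hk; have := hm k; rewrite !nth_rcons hk.
    rewrite (ltn_trans (ltnSn k) hk); apply; exact: ltnW.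
- case=> [[[_ a1] sz hin hm hl] hq hmq].
  split => //; rewrite ?size_rcons ?hh //.
  + by split=> //; case: (L).
  + by rewrite addnS sz.
  + move=> k hk; rewrite nth_rcons; case: ltnP => hk2; first exact: hin.
    have -> : k = size L by apply/eqP; rewrite eqn_leq -ltnS hk hk2.
    by rewrite eqxx sz.
  + move=> k hk; rewrite !nth_rcons.
    case: (ltnP k.+1 (size L)) => hk2.
    * by rewrite (ltn_trans (ltnSn k) hk2); apply: hm.
    * have ek : k.+1 = size L by apply/eqP; rewrite eqn_leq -ltnS hk hk2.
      rewrite ek eqxx -ek ltnSn.
      have -> : nth x0 L k = last x0 L by rewrite -nth_last -ek.
      exact: hmq.
Qed.

Lemma VA_single e a q :
  VA e.+1 a [:: q] <-> [/\ a = e.+1, q \in P e.+1 &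
     ((1 < e.+1)%N -> forall q', q' \in P e -> ~~ meetp q' q)].
Proof.
split.
- case=> [[_ a1]] /= sz hin _ hl.
  have ea : a = e.+1 by rewrite addn1 in sz; case: sz.
  split => //.
  + by have := hin 0 isT; rewrite addn0 ea.
  + by move: hl; rewrite ea.
- case=> -> hq hl; split => //=.
  + by rewrite addn1.
  + by case=> // _; rewrite addn0.
Qed.

Definition INV i (st : seq (sq T) * seq (sq T)) :=
 [/\ forall a L, (a, L) \in st.1 <-> VA i a L,
     forall a L, (a, L) \in st.2 <-> exists2 e, (e < i)%N &
          VA e a L /\ (forall q, q \in P e.+1 -> ~~ meetp (last x0 L) q)
   & (1 <= i)%N -> forall q, q \in P i -> exists2 s, s \in st.1 & lastp s = q].

Lemma INV0 : INV 0 ([::],[::]).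
Proof.
split => //= a L; split => //.
- by case=> [[L0 a1]] sz; case: L L0 sz => //= ? ? _; lia.
- by case.
Qed.

Lemma VA_last i a L : VA i a L -> last x0 L \in P i.
Proof.
case=> [[L0 a1]] sz hin _ _; have hs : (0 < size L)%N by case: (L) L0.
have := hin (size L).-1; rewrite nth_last; have -> : (a + (size L).-1 = i)%N by lia.
apply; lia.
Qed.

Lemma INVS i st : INV i st -> INV i.+1 (alg_step P st i.+1).
Proof.
case: st => al dd [/= HA HB HC].
have still_mem : forall s', s' \in flatten [seq [seq (s.1, rcons s.2 q) | q <- P i.+1 & meetp (lastp s) q]
                       | s <- al] <-> exists a L q, [/\ (a, L) \in al, q \in P i.+1,
                          meetp (last x0 L) q & s' = (a, rcons L q)].
  move=> s'; split.
  - case/flattenP => x /mapP [[a L] hs ->] /mapP [q]; rewrite mem_filter => /andP [hm hq] ->.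
    by exists a, L, q.
  - case=> a [L [q [hs hq hm ->]]]; apply/flattenP.
    exists [seq ((a, L).1, rcons (a, L).2 q0) | q0 <- P i.+1 & meetp (lastp (a, L)) q0].
      by apply: (map_f _ hs).
    by apply: (map_f (fun q0 => ((a, L).1, rcons (a, L).2 q0))); rewrite mem_filter hm hq.
have fresh_cond : forall q, q \in P i.+1 ->
   ~~ has (fun s => meetp (lastp s) q) al <->
   ((1 < i.+1)%N -> forall q', q' \in P i -> ~~ meetp q' q).
  move=> q hq; split.
  - move=> /hasPn hn i1 q' hq'; have [s hs <-] := HC i1 q' hq'; exact: hn.
  - move=> h; apply/hasPn => [[a L]] /HA hv; rewrite /lastp /=.
    have hi : (1 < i.+1)%N by case: hv => [[L0 a1]] sz _ _ _; case: L L0 sz => //= *; lia.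
    exact: (h hi _ (VA_last _ _ _ hv)).
split => /=.
- move=> a L'; rewrite mem_cat; split.
  + case/orP.
    * case/still_mem => a0 [L [q [hs hq hm [-> ->]]]].
      have hv := (HA _ _).1 hs.
      have L0 : L != [::] by case: hv => [[]]. 
      by apply/(VA_rcons _ _ _ _ L0).
    * case/mapP => q; rewrite mem_filter => /andP [hf hq] [-> ->].
      by apply/VA_single; split => //; apply/fresh_cond.
  + case/lastP: L' => [|L q]; first by case=> [[]].
    case: (eqVneq L [::]) => [-> | L0].
    * case/VA_single => -> hq hl; apply/orP; right.
      by apply: (map_f (fun q0 => (i.+1, [:: q0]))); rewrite mem_filter hq andbT; apply/fresh_cond.
    * case/(VA_rcons _ _ _ _ L0) => hv hq hm; apply/orP; left; apply/still_mem.
      by exists a, L, q; split => //; apply/HA.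
- move=> a L; rewrite mem_cat; split.
  + case/orP => [/HB [e he hv]|].
    * by exists e => //; apply: ltnW.
    * rewrite mem_filter => /andP [/hasPn hn /HA hv]; exists i => //; split => // q hq.
  + case=> e he [hv hr]; apply/orP.
    case: (ltnP e i) => hei.
    * by left; apply/HB; exists e.
    * have ei : e = i by lia.
      subst e; right; rewrite mem_filter; apply/andP; split; last exact/HA.
      exact/hasPn.
- move=> _ q hq; case: (boolP (has (fun s => meetp (lastp s) q) al)).
  + case/hasP => [[a L] hs hm]; exists (a, rcons L q); last by rewrite /lastp last_rcons.
    rewrite mem_cat; apply/orP; left; apply/still_mem; exists a, L, q; split => //.
  + move=> hn; exists (i.+1, [:: q]) => //; rewrite mem_cat; apply/orP; right.
    by apply: (map_f (fun q0 => (i.+1, [:: q0]))); rewrite mem_filter hq andbT.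
Qed.

Lemma INVn n : INV n (foldl (alg_step P) ([::],[::]) (iota 1 n)).
Proof.
elim: n => [|n IH]; first exact: INV0.
rewrite -addn1 iotaD foldl_cat add1n addn1 /=; exact: INVS.
Qed.
End Alg.

Theorem proposition17 (d : nat) (F : finFieldType) (K N : {set {set 'I_d}})
  (n : nat) (V : nat -> {set {set {set 'I_d}}}) (S : nat -> {set {set 'I_d}})
  (m : nat -> nat) (M : forall i, 'I_(m i) -> {set {set 'I_d}})
  (lt : forall i, rel 'I_(m i))
  (PE : forall i, 'I_(m i) -> {set {set 'I_d}} * {set {set 'I_d}}) :
  is_complex K -> closed_in K N ->
  (forall i, (1 <= i <= n)%N ->
     [/\ mvf K (V i),
         isolated_by F K (V i) N (S i),
         morse_dec F K (V i) N (S i) (M i) (lt i)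
       & forall j, index_pair F K (V i) N (M i j) (PE i j).1 (PE i j).2]) ->
  forall f, f \in find_CM_filtrations n (fun i => [seq PE i j | j <- enum 'I_(m i)])
            <-> is_CM_filtration n PE f.
Proof.
move=> _ _ _ f.
pose P i := [seq PE i j | j <- enum 'I_(m i)].
have inP : forall i q, q \in P i <-> exists j, q = PE i j.
  move=> i q; split.
  - by case/mapP => j _ ->; exists j.
  - by case=> j ->; apply: map_f; rewrite mem_enum.
have [HA HB _] := INVn _ P n.
rewrite /find_CM_filtrations.
change (fun i => [seq PE i j | j <- enum 'I_(m i)]) with P.
set st := foldl _ _ _.
split.
- case/mapP => [[a L]] hs ->; rewrite mem_cat in hs.
  have [e [hv hen hr]] : exists e, [/\ VA _ P e a L, (e <= n)%N &
       ((a + size L <= n)%N -> forall q, q \in P (a + size L) -> ~~ meetp (last (set0,set0) L) q)].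
    case/orP: hs => [/HB [e he [hv hr]] | /HA hv].
    + exists e; split => //; first exact: ltnW.
      by case: hv => _ sz _ _ _; rewrite sz.
    + exists n; split => //.
      by case: hv => _ sz _ _ _; rewrite sz ltnn.
  case: hv => [[L0 a1]] sz hin hm hl.
  exists a, L; split => //; split => //; split => //; split.
    by rewrite sz.
  split.
    by move=> k hk; apply/inP; apply: hin.
  split => //; split.
    by move=> a2 j; apply: hl => //; apply/inP; exists j.
  by move=> h j; apply: hr => //; apply/inP; exists j.
- case=> a [L [-> [L0 [a1 [szn [hin [hm [hl hr]]]]]]]].
  apply/mapP; exists (a, L) => //; rewrite mem_cat.
  have hs : (0 < size L)%N by case: (L) L0.
  have hv : VA _ P (a + size L).-1 a L.
    split => //.
    + by rewrite prednK // addn_gt0 hs orbT.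
    + by move=> k hk; apply/inP; apply: hin.
    + move=> a2 q /inP [j ->]; exact: hl.
  case: (ltnP (a + size L) n.+1) => hn.
  + apply/orP; left; apply/HB; exists (a + size L).-1.
    * by rewrite -ltnS prednK // addn_gt0 hs orbT.
    * split => //; rewrite prednK ?addn_gt0 ?hs ?orbT // => q /inP [j ->].
      exact: hr.
  + have e1 : (a + size L = n.+1)%N by apply/eqP; rewrite eqn_leq szn hn.
    apply/orP; right; apply/HA; by rewrite e1 in hv.
Qed.
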